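(* Let $L\in K[D]$ with $\operatorname{Sym}_L=S_1S_2$, where $S_1,S_2$ are coprime homogeneous polynomials. Then for every $t$ with $0\le t<\operatorname{ord}(L)$ there is at most one, up to lower order terms, partial factorization of $L$ of order $t$ and type $(S_1)(S_2)$. That is: if $F_1\circ F_2$ and $F_1'\circ F_2'$ are two such partial factorizations, then $\operatorname{ord}(F_i-F_i')<t-(d-d_i)$ for $i=1,2$, where $d=\operatorname{ord}L$ and $d_i=\deg S_i$.
   Context: $K$ is a field with commuting derivations $\partial_1,\dots,\partial_n$, and $K[D]=K[D_1,\dots,D_n]$ is the ring of linear differential operators over $K$: the $D_i$ commute with each other and $D_i\circ a=aD_i+\partial_i(a)$ for $a\in K$. Every $L\in K[D]$ is uniquely $\sum_{|J|\le d}a_JD^J$ with $a_J\in K$ and $D^J=D_1^{j_1}\cdots D_n^{j_n}$. The order $\operatorname{ord}(L)$ is the largest $|J|=j_1+\dots+j_n$ with $a_J\ne0$, and $\operatorname{ord}(0)=-\infty$. The symbol $\operatorname{Sym}_L=\sum_{|J|=\operatorname{ord}L}a_JX^J\in K[X_1,\dots,X_n]$. For $t\in\{0,\dots,\operatorname{ord}L\}$, a partial factorization of $L$ of order $t$ and type $(S_1)(S_2)$ is a composition $F_1\circ F_2$ with $\operatorname{Sym}_{F_i}=S_i$ and $\operatorname{ord}(L-F_1\circ F_2)<t$. *)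

(* Defs.v *)
From HB Require Import structures.
From mathcomp Require Import all_boot all_order all_algebra.
From mathcomp Require Import mpoly.
Set Implicit Arguments. Unset Strict Implicit. Unset Printing Implicit Defensive.
Import Order.TTheory GRing.Theory Num.Theory.
Local Open Scope ring_scope.

Definition commuting_derivations (K : fieldType) (n : nat) (der : 'I_n -> K -> K) :=
  [/\ forall i a b, der i (a + b) = der i a + der i b,
      forall i a b, der i (a * b) = a * der i b + der i a * b
    & forall i j a, der i (der j a) = der j (der i a)].

(* Operators L = sum_J a_J D^J in K[D] are represented by their coefficient
   families: an element of {mpoly K[n]} whose coefficient of 'X_[J] is a_J.
   The (commutative) ring structure of {mpoly K[n]} is used only for the
   K-module structure and for symbols; composition is defined below. *)
Section DiffOp.
Variables (K : fieldType) (n : nat) (der : 'I_n -> K -> K).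

(* D_i o M, for M = sum_J b_J D^J :  sum_J (b_J D^J D_i + der_i(b_J) D^J) *)
Definition Di_comp (i : 'I_n) (M : {mpoly K[n]}) : {mpoly K[n]} :=
  'X_i * M + \sum_(m <- msupp M) der i M@_m *: 'X_[m].

Definition DJ_comp (J : 'X_{1..n}) (M : {mpoly K[n]}) : {mpoly K[n]} :=
  foldr (fun i N => iter (J i) (Di_comp i) N) M (enum 'I_n).

Definition dcomp (L M : {mpoly K[n]}) : {mpoly K[n]} :=
  \sum_(m <- msupp L) L@_m *: DJ_comp m M.

End DiffOp.

(* order: None stands for -oo (order of 0) *)
Definition dord (K : fieldType) (n : nat) (L : {mpoly K[n]}) : option nat :=
  if L == 0 then None else Some (msize L).-1.

Definition ord_lt (K : fieldType) (n : nat) (L : {mpoly K[n]}) (r : int) : bool :=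
  if dord L is Some k then (k%:Z < r)%R else true.

Definition Sym (K : fieldType) (n : nat) (L : {mpoly K[n]}) : {mpoly K[n]} :=
  \sum_(m <- msupp L | mdeg m == (msize L).-1) L@_m *: 'X_[m].

Definition pdeg (K : fieldType) (n : nat) (S : {mpoly K[n]}) : nat := (msize S).-1.

(* coprime in K[X_1..X_n]: every common divisor is a constant *)
Definition mcoprime (K : fieldType) (n : nat) (S1 S2 : {mpoly K[n]}) : Prop :=
  forall q : {mpoly K[n]},
    (exists r, S1 = q * r) -> (exists r, S2 = q * r) -> (msize q <= 1)%N.

Definition partial_factorization (K : fieldType) (n : nat) (der : 'I_n -> K -> K)
    (L : {mpoly K[n]}) (t : nat) (S1 S2 F1 F2 : {mpoly K[n]}) : Prop :=
  [/\ Sym F1 = S1, Sym F2 = S2 & ord_lt (L - dcomp der F1 F2) t%:Z].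

(* Main.v *)
Require Import Defs.
From HB Require Import structures.
From mathcomp Require Import all_boot all_order all_algebra.
From mathcomp Require Import mpoly.
From mathcomp Require Import ring zify.
From mathcomp Require ssrcomplements.
From Stdlib Require Import Classical ClassicalEpsilon.
Set Implicit Arguments. Unset Strict Implicit. Unset Printing Implicit Defensive.
Import Order.TTheory GRing.Theory Num.Theory.
Local Open Scope ring_scope.

Lemma min_ex (P : nat -> Prop) : (exists n, P n) ->
  exists n, P n /\ forall m, (m < n)%N -> ~ P m.
Proof.
move=> [n Pn]; elim: n {-2}n (leqnn n) Pn => [|k IH] n.
  rewrite leqn0 => /eqP -> P0; exists 0%N; split => // m.
have [H|H] := classic (exists m, (m < n)%N /\ P m).
  move=> lenk Pn; case: H => m [ltmn Pm]; apply: (IH m) => //.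
  by rewrite -ltnS (leq_trans ltmn).
move=> _ Pn; exists n; split => // m ltmn Pm; apply: H; by exists m.
Qed.

Section Dv.
Variable R : comUnitRingType.
Definition dv (a b : R) := exists c, b = a * c.

Lemma dv_refl a : dv a a. Proof. by exists 1; rewrite mulr1. Qed.
Lemma dv_trans a b c : dv a b -> dv b c -> dv a c.
Proof. by move=> [x ->] [y ->]; exists (x * y); rewrite mulrA. Qed.
Lemma dv_mulr a b c : dv a b -> dv a (b * c).
Proof. by move=> [x ->]; exists (x * c); rewrite mulrA. Qed.
Lemma dv_mull a b c : dv a b -> dv a (c * b).
Proof. by rewrite mulrC; apply: dv_mulr. Qed.
Lemma dv_mul2 a b c : dv a b -> dv (c * a) (c * b).
Proof. by move=> [x ->]; exists x; rewrite mulrA. Qed.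
Lemma dv_unit u a : u \is a GRing.unit -> dv u a.
Proof. by move=> Uu; exists (u^-1 * a); rewrite mulrA mulrV // mul1r. Qed.
Lemma dv0 a : dv a 0. Proof. by exists 0; rewrite mulr0. Qed.
Lemma dvD a x y : dv a x -> dv a y -> dv a (x + y).
Proof. by move=> [u ->] [v ->]; exists (u + v); rewrite mulrDr. Qed.
Lemma dvN a x : dv a x -> dv a (- x).
Proof. by move=> [u ->]; exists (- u); rewrite mulrN. Qed.
Lemma dvB a x y : dv a x -> dv a y -> dv a (x - y).
Proof. by move=> ? ?; apply: dvD => //; apply: dvN. Qed.
Lemma dv_sum a (I : Type) (r : seq I) (P : pred I) (F : I -> R) :
  (forall i, P i -> dv a (F i)) -> dv a (\sum_(i <- r | P i) F i).
Proof. move=> H; apply: big_ind => //; [exact: dv0| exact: dvD]. Qed.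
Lemma dv_unitr u a : dv a u -> u \is a GRing.unit -> a \is a GRing.unit.
Proof.
move=> [x ->] /unitrP [y [h1 h2]]; apply/unitrPr; exists (x * y).
by rewrite mulrA.
Qed.
End Dv.

Section Measured.
Variable R : idomainType.

Definition primeR (p : R) := [/\ p != 0, p \isn't a GRing.unit &
  forall a b, dv p (a * b) -> dv p a \/ dv p b].
Definition PD := forall a : R, a != 0 -> a \isn't a GRing.unit ->
  exists2 p, primeR p & dv p a.
Definition measured (nu : R -> nat) :=
  (forall a b, a != 0 -> b != 0 -> nu (a * b) = (nu a + nu b)%N) /\
  (forall a, a != 0 -> nu a = 0%N -> a \is a GRing.unit).

Lemma dv_ne0 (a b : R) : dv a b -> b != 0 -> a != 0.
Proof. by move=> [x ->]; apply: contraNneq => ->; rewrite mul0r. Qed.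

Lemma euclid nu : measured nu -> PD -> forall f g a b : R, f != 0 ->
  (forall q, dv q f -> dv q g -> q \is a GRing.unit) ->
  f * b = a * g -> dv f a.
Proof.
move=> [nuM nu0] pd f; elim: {f}(nu f) {-2}f (leqnn (nu f)) => [|k IH] f lefk g a b f0 cop e.
  by apply: dv_unit; apply: nu0 => //; apply/eqP; rewrite -leqn0.
have [Uf|Nf] := boolP (f \is a GRing.unit); first exact: dv_unit.
have [p [p0 Np pp] [f' ef]] := pd f f0 Nf.
have f'0 : f' != 0 by apply: contraNneq f0 => h; rewrite ef h mulr0.
have : dv p (a * g) by rewrite -e ef; exists (f' * b); rewrite mulrA.
case/pp => [[a' ea]|pg]; last first.
  by case/negP: Np; apply: cop => //; rewrite ef; exists f'.
have e' : f' * b = a' * g.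
  by apply: (mulfI p0); rewrite !mulrA -ef -ea.
have : dv f' a'.
  apply: (IH f') e' => //; last first.
    by move=> q qf qg; apply: cop => //; rewrite ef; apply: dv_mull.
  have pos : (0 < nu p)%N.
    by rewrite lt0n; apply/eqP => h; case/negP: Np; apply: nu0.
  by rewrite -ltnS (leq_trans _ lefk) // ef nuM // -addn1 addnC leq_add2r.
by rewrite ef ea; apply: dv_mul2.
Qed.
End Measured.

Section PolyPD.
Variable R : idomainType.
Variable nu : R -> nat.
Hypothesis Hnu : measured nu.
Hypothesis pd : PD R.

Lemma polyC_unitE (c : R) : (c%:P \is a GRing.unit) = (c \is a GRing.unit).
Proof.
rewrite poly_unitE size_polyC coefC /=.
by have [->|c0] := eqVneq c 0; rewrite ?unitr0.
Qed.

Lemma dvC_coef (c : R) (p : {poly R}) : dv c%:P p <-> forall i, dv c p`_i.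
Proof.
split.
  by move=> [q ->] i; exists q`_i; rewrite coefCM.
move=> H.
pose f i := proj1_sig (constructive_indefinite_description _ (H i)).
have hf i : p`_i = c * f i.
  by rewrite /f; case: (constructive_indefinite_description _ _).
exists (\poly_(i < size p) f i); apply/polyP => i.
rewrite coefCM coef_poly; case: ltnP => // hi.
by rewrite mulr0 nth_default.
Qed.

Lemma prime_polyC (p : R) : primeR p -> primeR p%:P.
Proof.
case=> p0 Np pp; split; first by rewrite polyC_eq0.
  by rewrite polyC_unitE.
move=> a b hab; apply: NNPP => /not_or_and [na nb].
have /not_all_ex_not [i hi] : ~ (forall i, dv p a`_i) by move/dvC_coef.
have /not_all_ex_not [j hj] : ~ (forall i, dv p b`_i) by move/dvC_coef.
have [i0 [hi0 mi]] := min_ex (ex_intro (fun i => ~ dv p a`_i) i hi).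
have [j0 [hj0 mj]] := min_ex (ex_intro (fun i => ~ dv p b`_i) j hj).
have /dvC_coef /(_ (i0 + j0)%N) := hab.
have lt : (i0 < (i0 + j0).+1)%N by rewrite ltnS leq_addr.
rewrite coefM (bigD1 (Ordinal lt)) //= addKn => hs.
have : dv p (a`_i0 * b`_j0).
  move: hs; set S := \sum_(_ < _ | _) _ => hs.
  have -> : a`_i0 * b`_j0 = (a`_i0 * b`_j0 + S) - S by rewrite addrK.
  apply: dvB; first exact: hs.
  apply: dv_sum => k /= nk.
  have [lki|lik] := ltnP k i0.
    apply: dv_mulr; exact: (NNPP _ (mi k lki)).
  have lik' : (i0 < k)%N.
    by rewrite ltn_neqAle lik andbT eq_sym; apply: contra nk => /eqP h;
       apply/eqP/val_inj.
  apply: dv_mull; apply: NNPP; apply: mj.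
  have := ltn_ord k; rewrite ltnS => hk.
  by rewrite ltn_subLR // ltn_add2r.
by case/pp.
Qed.

Definition prim (q : {poly R}) := forall c, dv c%:P q -> c \is a GRing.unit.

Lemma content p : p != 0 -> exists c q, [/\ c != 0, p = c%:P * q & prim q].
Proof.
case: Hnu => nuM nu0.
elim: {p}(nu (lead_coef p)) {-2}p (leqnn (nu (lead_coef p))) => [|k IH] p lep p0.
  exists 1, p; split; rewrite ?oner_eq0 ?mul1r // => c [q eq].
  apply: (@dv_unitr _ (lead_coef p)); first by exists (lead_coef q);
    rewrite eq lead_coefM lead_coefC.
  by apply: nu0; [rewrite lead_coef_eq0 | apply/eqP; rewrite -leqn0].
have [Pp|] := classic (prim p).
  by exists 1, p; split; rewrite ?oner_eq0 ?mul1r.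
move=> np; have [c hc] := not_all_ex_not _ _ np.
have [cp Nc] := imply_to_and _ _ hc.
have c0 : c != 0 by rewrite -polyC_eq0; apply: dv_ne0 cp p0.
have [r [r0 Nr pr] [c' ec]] := pd c0 (introN idP Nc).
have [p' ep] : dv r%:P p.
  by apply: dv_trans cp; exists c'%:P; rewrite ec polyCM.
have p'0 : p' != 0 by apply: contraNneq p0 => h; rewrite ep h mulr0.
have [c1 [q [c10 ep' Pq]]] : exists c q, [/\ c != 0, p' = c%:P * q & prim q].
  apply: (IH p') => //.
  have pos : (0 < nu r)%N.
    by rewrite lt0n; apply/eqP => h; case/negP: Nr; apply: nu0.
  move: lep; rewrite ep lead_coefM lead_coefC nuM ?lead_coef_eq0 // => h.
  by rewrite -ltnS (leq_trans _ h) // -addn1 addnC leq_add2r.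
exists (r * c1), q; split => //; first by rewrite mulf_neq0.
by rewrite ep ep' polyCM mulrA.
Qed.

Lemma gauss_cancel q c a : prim q -> c != 0 -> dv q (c%:P * a) -> dv q a.
Proof.
case: Hnu => nuM nu0 Pq.
elim: {c}(nu c) {-2}c (leqnn (nu c)) a => [|k IH] c lec a c0 h.
  have Uc : c \is a GRing.unit by apply: nu0 => //; apply/eqP; rewrite -leqn0.
  apply: dv_trans h _; exists (c^-1)%:P.
  by rewrite mulrC mulrA -polyCM mulVr // mul1r.
have [Uc|Nc] := boolP (c \is a GRing.unit).
  apply: dv_trans h _; exists (c^-1)%:P.
  by rewrite mulrC mulrA -polyCM mulVr // mul1r.
have [r rpr [c' ec]] := pd c0 Nc.
have rpr' := prime_polyC rpr; case: rpr => r0 Nr _.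
case: rpr' => _ _ pp.
have c'0 : c' != 0 by apply: contraNneq c0 => e; rewrite ec e mulr0.
case: h => s es.
have : dv r%:P (q * s) by rewrite -es ec polyCM -mulrA; apply: dv_mulr; apply: dv_refl.
case/pp => [rq|[s' es']].
  by case/negP: Nr; apply: Pq.
apply: (IH c') => //.
  have pos : (0 < nu r)%N.
    by rewrite lt0n; apply/eqP => h; case/negP: Nr; apply: nu0.
  by move: lec; rewrite ec nuM // => h; rewrite -ltnS (leq_trans _ h) // -addn1 addnC leq_add2r.
exists s'; apply: (mulfI (_ : r%:P != 0)); first by rewrite polyC_eq0.
by rewrite mulrA -polyCM -ec es es' mulrCA.
Qed.

Lemma PD_poly : PD {poly R}.
Proof.
move=> p p0 Np.
have [[c [cp Nc]]|A] := classic (exists c, dv c%:P p /\ c \isn't a GRing.unit).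
  have c0 : c != 0 by rewrite -polyC_eq0; apply: dv_ne0 cp p0.
  have [r rpr rc] := pd c0 Nc.
  exists r%:P; first exact: prime_polyC.
  by apply: dv_trans cp; case: rc => x ->; exists x%:P; rewrite polyCM.
have Pp : prim p.
  move=> c cp; apply: NNPP => Nc; apply: A; exists c; split => //; exact/negP.
have sp : (1 < size p)%N.
  rewrite ltnNge; apply/negP => /size1_polyC e.
  have U : p`_0 \is a GRing.unit by apply: Pp; rewrite {2}e; exact: dv_refl.
  by case/negP: Np; rewrite e polyC_unitE.
have [k [[q [qp sq ek]] mk]] := min_ex (ex_intro (fun k => exists q,
  [/\ dv q p, (1 < size q)%N & size q = k]) _ (ex_intro _ p (And3 (dv_refl p) sp erefl))).
exists q => //.
have q0 : q != 0 by rewrite -size_poly_gt0 (ltn_trans _ sq).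
have Pq : prim q by move=> c cq; apply: Pp; apply: dv_trans qp.
have M : forall r, dv r q -> (1 < size r)%N -> (size q <= size r)%N.
  move=> r rq sr; rewrite leqNgt; apply/negP => lt.
  by apply: (mk (size r)); [rewrite -ek | exists r; split => //; apply: dv_trans qp].
split => //.
  by rewrite poly_unitE negb_and; apply/orP; left; rewrite neq_ltn sq orbT.
move=> a b hab; apply: NNPP => /not_or_and [na nb].
have a0 : a != 0 by apply/eqP => e; apply: na; rewrite e; exact: dv0.
have Ta : exists m, exists u v : {poly R},
    u * q + v * a != 0 /\ size (u * q + v * a) = m.
  by exists (size a), 0, 1; rewrite mul0r mul1r add0r.
have [m [[u [v [h0 hs]]] mm]] := min_ex Ta.
set h := u * q + v * a in h0 hs.
have red : forall x, (exists u' v', x = u' * q + v' * a) ->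
    dv h ((lead_coef h ^+ scalp x h)%:P * x).
  move=> x [u' [v' ex]].
  have e := Pdiv.Idomain.divp_eq x h.
  have emod : x %% h = ((lead_coef h ^+ scalp x h)%:P * u' - (x %/ h) * u) * q +
     ((lead_coef h ^+ scalp x h)%:P * v' - (x %/ h) * v) * a.
    have -> : x %% h = (lead_coef h ^+ scalp x h *: x) - x %/ h * h.
      by rewrite e addrC addKr.
    by rewrite -mul_polyC ex /h; ring.
  have em0 : x %% h = 0.
    apply: NNPP => /eqP nz; apply: (mm (size (x %% h))).
      by rewrite -hs ltn_modp.
    by exists ((lead_coef h ^+ scalp x h)%:P * u' - (x %/ h) * u),
      ((lead_coef h ^+ scalp x h)%:P * v' - (x %/ h) * v); rewrite -emod.
  by exists (x %/ h); rewrite mul_polyC e em0 addr0 mulrC.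
have [c [h1 [c0 eh Ph1]]] := content h0.
have lc0 : forall k, lead_coef h ^+ k != 0.
  by move=> j; rewrite expf_neq0 // lead_coef_eq0.
have h1x : forall x, (exists u' v', x = u' * q + v' * a) -> dv h1 x.
  move=> x /red hx; apply: (gauss_cancel Ph1 (lc0 (scalp x h))).
  by apply: dv_trans hx; rewrite eh; exists c%:P; rewrite mulrC.
have h1q : dv h1 q by apply: h1x; exists 1, 0; rewrite mul1r mul0r addr0.
have h1a : dv h1 a by apply: h1x; exists 0, 1; rewrite mul1r mul0r add0r.
have [sh1|sh1] := ltnP 1 (size h1).
  have := M _ h1q sh1; case: h1q => w ew.
  have wn0 : w != 0 by apply: contraNneq q0 => e; rewrite ew e mulr0.
  have h10 : h1 != 0 by apply: contraNneq q0 => e; rewrite ew e mul0r.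
  rewrite {1}ew size_mul // => sw.
  have /size1_polyC ew' : (size w <= 1)%N.
    move: sw; rewrite -subn1; lia.
  move: ew'; set w0 := w`_0 => ew'.
  have Uw : w0 \is a GRing.unit.
    by apply: Pq; rewrite ew ew'; apply: dv_mull; exact: dv_refl.
  apply: na; apply: dv_trans h1a; exists (w0^-1)%:P.
  by rewrite ew ew' -mulrA -polyCM mulrV // mulr1.
move/size1_polyC: sh1 => eh1.
have U : h1`_0 \is a GRing.unit by apply: Ph1; rewrite {2}eh1; exact: dv_refl.
have beta0 : c * h1`_0 != 0.
  by rewrite mulf_neq0 //; apply/eqP => e; move: U; rewrite e unitr0.
apply: nb; apply: (gauss_cancel Pq beta0).
have -> : (c * h1`_0)%:P * b = u * b * q + v * (a * b).
  by rewrite polyCM -eh1 -eh /h; ring.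
by apply: dvD; [apply: dv_mull; exact: dv_refl | apply: dv_mull].
Qed.

End PolyPD.

Local Notation widen := (widen_ord (leqnSn _)).

Section Muni.
Variables (R : ringType) (n : nat).

Definition mr (m : 'X_{1..n.+1}) : 'X_{1..n} := [multinom m (widen i) | i < n].
Definition mext (m : 'X_{1..n}) (k : nat) : 'X_{1..n.+1} := [multinom of rcons m k].

Lemma mext_max m k : (mext m k) ord_max = k.
Proof.
rewrite multinomE (tnth_nth 0%N) nth_rcons /=.
by rewrite size_tuple ltnn eqxx.
Qed.

Lemma mext_widen m k (i : 'I_n) : (mext m k) (widen i) = m i.
Proof.
case: m=> m; rewrite !(mnm_nth 0%N) nth_rcons.
by rewrite size_tuple /=; case: i => i /= ->.
Qed.

Lemma mr_mext m k : mr (mext m k) = m.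
Proof. by apply/mnmP => i; rewrite mnmE mext_widen. Qed.

Lemma mext_mr m : mext (mr m) (m ord_max) = m.
Proof.
apply/mnmP => i; case: (unliftP ord_max i) => [j ->|->]; last by rewrite mext_max.
have -> : lift ord_max j = widen j.
  by apply/val_inj; rewrite /= /bump leqNgt ltn_ord.
by rewrite mext_widen mnmE.
Qed.

Lemma mext_eq m k m' : (m' == mext m k) = (mr m' == m) && (m' ord_max == k).
Proof.
apply/eqP/andP => [->|[/eqP <- /eqP <-]]; last by rewrite mext_mr.
by rewrite mr_mext mext_max.
Qed.

Lemma muni_coef (p : {mpoly R[n.+1]}) k m : ((muni p)`_k)@_m = p@_(mext m k).
Proof.
rewrite muniE coef_sum (raddf_sum (mcoeff m)).
have -> : p@_(mext m k) = (\sum_(m0 <- msupp p) p@_m0 *: 'X_[m0])@_(mext m k).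
  by rewrite -mpolyE.
rewrite (raddf_sum (mcoeff (mext m k))).
apply: eq_bigr => m' _.
rewrite coefZ coefXn [k == _]eq_sym.
case: (m' ord_max =P k) => [e|ne]; rewrite /= ?mulr1 ?mulr0.
  by rewrite !mcoeffZ !mcoeffX mext_eq e eqxx andbT.
by rewrite mcoeff0 mcoeffZ mcoeffX mext_eq (introF eqP ne) andbF mulr0.
Qed.

Lemma mcoeff_sumX (q : {mpoly R[n]}) m :
  \sum_(m' <- msupp q) q@_m' * (m' == m)%:R = q@_m.
Proof.
transitivity ((\sum_(m' <- msupp q) q@_m' *: 'X_[m'])@_m); last by rewrite -mpolyE.
rewrite (raddf_sum (mcoeff m)); apply: eq_bigr => m' _.
by rewrite /= mcoeffZ mcoeffX.
Qed.

Lemma muni_inj : injective (@muni n R).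
Proof.
by move=> p q e; apply/mpolyP => m; rewrite -(mext_mr m) -!muni_coef e.
Qed.

Lemma muni_surj (P : {poly {mpoly R[n]}}) : exists p, muni p = P.
Proof.
exists (\sum_(i < size P) \sum_(m' <- msupp P`_i) P`_i@_m' *: 'X_[mext m' i]).
apply/polyP => k; apply/mpolyP => m; rewrite muni_coef.
have eP : P = \sum_(i < size P) P`_i *: 'X^i by rewrite -poly_def coefK.
rewrite [in RHS]eP coef_sumMXn (raddf_sum (mcoeff m)) (raddf_sum (mcoeff (mext m k))).
rewrite [in RHS]big_mkcond /=; apply: eq_bigr => i _.
rewrite (raddf_sum (mcoeff _)).
under eq_bigr => m' _ do rewrite /= mcoeffZ mcoeffX mext_eq mr_mext mext_max.
case: (i == k :> nat); last first.
  by apply: big1 => m' _; rewrite andbF mulr0.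
by under eq_bigr do rewrite andbT; rewrite mcoeff_sumX.
Qed.
End Muni.

Lemma PD_transport (A B : idomainType) (f : A -> B) :
  f 0 = 0 -> f 1 = 1 -> (forall x y, f (x * y) = f x * f y) ->
  injective f -> (forall b, exists a, f a = b) -> PD B -> PD A.
Proof.
move=> f0 f1 fM finj fsurj pdB.
have dvb : forall x y, dv (f x) (f y) -> dv x y.
  move=> x y [z ez]; have [w ew] := fsurj z.
  by exists w; apply: finj; rewrite fM ew.
have unb : forall x, f x \is a GRing.unit -> x \is a GRing.unit.
  move=> x /unitrPr [z ez]; have [w ew] := fsurj z.
  by apply/unitrPr; exists w; apply: finj; rewrite fM ew f1.
move=> a a0 Na.
have fa0 : f a != 0 by apply: contraNneq a0 => e; apply/eqP; apply: finj; rewrite e f0.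
have Nfa : f a \isn't a GRing.unit by apply: contra Na; apply: unb.
have [pi [pi0 Npi ppi] hpi] := pdB _ fa0 Nfa.
have [r er] := fsurj pi.
exists r; last by apply: dvb; rewrite er.
split.
- by apply: contraNneq pi0 => e; rewrite -er e f0.
- apply: contra Npi => /unitrPr [z ez]; apply/unitrPr; exists (f z).
  by rewrite -er -fM ez f1.
- move=> x y hxy; have : dv pi (f x * f y).
    by rewrite -er -fM; case: hxy => z ->; exists (f z); rewrite fM.
  by case/ppi => h; [left|right]; apply: dvb; rewrite er.
Qed.

Section MP.
Variable K : fieldType.

Lemma mpoly_measured n : measured (fun p : {mpoly K[n]} => (msize p).-1).
Proof.
split.
  move=> a b a0 b0; rewrite msizeM //.
  by rewrite [msize a](mpolySpred _ a0) [msize b](mpolySpred _ b0) addSn addnS.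
move=> a a0 h.
have : msize a == 1%N.
  by rewrite [msize a](mpolySpred _ a0) h.
case/msize_poly1P => c c0 ->.
by apply/unitrPr; exists (c^-1)%:MP; rewrite -mpolyCM mulfV.
Qed.

Lemma PD_mpoly n : PD {mpoly K[n]}.
Proof.
elim: n => [|n IH].
  move=> a a0 Na; case/negP: Na; rewrite (nvar0_mpolyC a).
  have c0 : a@_0%MM != 0.
    by apply: contraNneq a0 => e; rewrite (nvar0_mpolyC a) e.
  by apply/unitrPr; exists ((a@_0%MM)^-1)%:MP; rewrite -mpolyCM mulfV.
apply: (@PD_transport _ _ (@muni n K)).
- exact: muni0.
- exact: muni1.
- exact: muniM.
- exact: muni_inj.
- exact: muni_surj.
exact: (PD_poly (mpoly_measured n) IH).
Qed.

Lemma mpoly_euclid n (f g a b : {mpoly K[n]}) : f != 0 ->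
  (forall q, dv q f -> dv q g -> q \is a GRing.unit) ->
  f * b = a * g -> dv f a.
Proof. exact: (@euclid _ _ (mpoly_measured n) (PD_mpoly (n:=n)) f g a b). Qed.

End MP.

Lemma ar1 x a b : (x < a -> x + b - 1 <= a + b - 1 - 1)%N.
Proof. lia. Qed.

Section D.
Variables (K : fieldType) (n : nat) (der : 'I_n -> K -> K).
Hypothesis Hder : commuting_derivations der.

Lemma der0 i : der i 0 = 0.
Proof.
case: Hder => hD _ _; have h := hD i 0 0; rewrite addr0 in h.
by apply: (addrI (der i 0)); rewrite addr0 -h.
Qed.

Lemma derB i a b : der i (a - b) = der i a - der i b.
Proof.
case: Hder => hD _ _.
by rewrite -[X in _ = der i X - _](subrK b) (hD i (a - b) b) addrK.
Qed.

Lemma sum_msupp_pick (F : K -> K) (M : {mpoly K[n]}) m : F 0 = 0 ->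
  \sum_(m' <- msupp M) F (M@_m') * (m' == m)%:R = F (M@_m).
Proof.
move=> F0; have [h|h] := boolP (m \in msupp M).
  rewrite (bigD1_seq m) //= ?msupp_uniq // eqxx mulr1 big1 ?addr0 //.
  by move=> m' /negbTE ->; rewrite mulr0.
rewrite memN_msupp_eq0 // F0 big1_seq // => m' /andP [_ hm'].
have -> : (m' == m) = false by apply: contraNF h => /eqP <-.
by rewrite mulr0.
Qed.

Lemma Dsum_coef i (M : {mpoly K[n]}) m :
  (\sum_(m' <- msupp M) der i M@_m' *: 'X_[m'])@_m = der i (M@_m).
Proof.
rewrite (raddf_sum (mcoeff m)).
under eq_bigr => m' _ do rewrite /= mcoeffZ mcoeffX.
exact: sum_msupp_pick (der0 i).
Qed.

Lemma Di_compB i (M M' : {mpoly K[n]}) : Di_comp der i (M - M') = Di_comp der i M - Di_comp der i M'.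
Proof.
apply/mpolyP => m; rewrite /Di_comp mcoeffB !mcoeffD !Dsum_coef mcoeffB derB.
by rewrite mulrBr mcoeffB; ring.
Qed.

Lemma iterB (f : {mpoly K[n]} -> {mpoly K[n]}) k :
  (forall x y, f (x - y) = f x - f y) -> forall x y, iter k f (x - y) = iter k f x - iter k f y.
Proof. by move=> hf; elim: k => //= k IH x y; rewrite IH hf. Qed.

Lemma DJ_compB J M M' : DJ_comp der J (M - M') = DJ_comp der J M - DJ_comp der J M'.
Proof.
rewrite /DJ_comp; elim: (enum 'I_n) => //= i s IH; rewrite IH; apply: iterB.
exact: Di_compB.
Qed.

Lemma DJ_comp0 J : DJ_comp der J 0 = 0.
Proof. by move: (DJ_compB J 0 0); rewrite !subrr. Qed.

Lemma dcompBr L M M' : dcomp der L (M - M') = dcomp der L M - dcomp der L M'.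
Proof.
by rewrite /dcomp -sumrB; apply: eq_bigr => m _; rewrite DJ_compB scalerBr.
Qed.

Lemma dcomp_wE L M k : (msize L <= k)%N ->
  dcomp der L M = \sum_(m : 'X_{1..n < k}) L@_m *: DJ_comp der m M.
Proof.
move=> lt_pk; pose I : subFinType _ := 'X_{1..n < k}.
rewrite /dcomp (ssrcomplements.big_mksub I) //=; first last.
+ by move=> x /msize_mdeg_lt /leq_trans /(_ lt_pk) ->.
+ by rewrite msupp_uniq.
by rewrite big_rmcond //= => m /memN_msupp_eq0 ->; rewrite scale0r.
Qed.

Lemma dcompBl L L' M : dcomp der (L - L') M = dcomp der L M - dcomp der L' M.
Proof.
pose k := maxn (msize L) (msize L').
have h1 : (msize L <= k)%N by rewrite leq_maxl.
have h2 : (msize L' <= k)%N by rewrite leq_maxr.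
have h3 : (msize (L - L') <= k)%N.
  by apply: leq_trans (msizeD_le _ _) _; rewrite msizeN.
rewrite !(@dcomp_wE _ _ k) // -sumrB; apply: eq_bigr => m _.
by rewrite mcoeffB scalerBl.
Qed.

Lemma dcomp0l M : dcomp der 0 M = 0.
Proof. by move: (dcompBl 0 0 M); rewrite !subrr. Qed.

Lemma dcomp0r L : dcomp der L 0 = 0.
Proof. by move: (dcompBr L 0 0); rewrite !subrr. Qed.

Lemma msize_le (X : {mpoly K[n]}) k :
  (forall m, (k <= mdeg m)%N -> X@_m = 0) -> (msize X <= k)%N.
Proof.
move=> H; rewrite leqNgt; apply/negP => h.
have X0 : X != 0 by rewrite -msize_poly_eq0 -lt0n (leq_ltn_trans _ h).
have := mlead_deg X0 => e.
have : X@_(mlead X) = 0 by apply: H; rewrite -ltnS e.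
by move/eqP; rewrite mleadc_eq0 (negbTE X0).
Qed.

Lemma msize_coef0 (X : {mpoly K[n]}) m : (msize X <= mdeg m)%N -> X@_m = 0.
Proof. by move/msize_mdeg_ge/memN_msupp_eq0. Qed.

Lemma msize_sum_le (I : Type) (r : seq I) (P : pred I) (F : I -> {mpoly K[n]}) k :
  (forall i, P i -> (msize (F i) <= k)%N) -> (msize (\sum_(i <- r | P i) F i) <= k)%N.
Proof.
move=> H; apply: (big_ind (fun X : {mpoly K[n]} => (msize X <= k)%N)) => //; first by rewrite msize0.
by move=> x y hx hy; apply: leq_trans (msizeD_le _ _) _; rewrite geq_max hx hy.
Qed.

Lemma msizeMle (P Q : {mpoly K[n]}) : (msize (P * Q) <= (msize P + msize Q).-1)%N.
Proof.
have [->|P0] := eqVneq P 0; first by rewrite mul0r msize0.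
have [->|Q0] := eqVneq Q 0; first by rewrite mulr0 msize0.
by rewrite msizeM.
Qed.

Lemma DsumS i (M : {mpoly K[n]}) : (msize (\sum_(m <- msupp M) der i M@_m *: 'X_[m]) <= msize M)%N.
Proof.
by apply: msize_le => m h; rewrite Dsum_coef (msize_coef0 h) der0.
Qed.

Lemma step i (m : 'X_{1..n}) (Y N : {mpoly K[n]}) :
  (msize (Y - 'X_[m] * N) <= (mdeg m + msize N).-1)%N ->
  (msize (Di_comp der i Y - 'X_[m + U_(i)] * N) <= (mdeg (m + U_(i)) + msize N).-1)%N.
Proof.
move=> hE; set E := Y - 'X_[m] * N in hE.
have eY : Y = E + 'X_[m] * N by rewrite /E subrK.
have -> : Di_comp der i Y - 'X_[m + U_(i)] * N =
   'X_i * E + \sum_(m <- msupp Y) der i Y@_m *: 'X_[m].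
  by rewrite /Di_comp mpolyXD {1}eY /E; ring.
rewrite mdegD mdeg1.
apply: leq_trans (msizeD_le _ _) _; rewrite geq_max; apply/andP; split.
  have [->|E0] := eqVneq E 0; first by rewrite mulr0 msize0.
  apply: leq_trans (msizeMle _ _) _; rewrite msizeX mdeg1.
  have : (0 < msize E)%N by rewrite lt0n msize_poly_eq0.
  move: hE; rewrite -!subn1; lia.
apply: leq_trans (DsumS _ _) _; rewrite eY.
apply: leq_trans (msizeD_le _ _) _; rewrite geq_max; apply/andP; split.
  by apply: leq_trans hE _; rewrite -!subn1; lia.
apply: leq_trans (msizeMle _ _) _; rewrite msizeX -!subn1.
by rewrite addn1.
Qed.

Lemma iter_step i k (m : 'X_{1..n}) (Y N : {mpoly K[n]}) :
  (msize (Y - 'X_[m] * N) <= (mdeg m + msize N).-1)%N ->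
  (msize (iter k (Di_comp der i) Y - 'X_[m + U_(i) *+ k] * N)
     <= (mdeg (m + U_(i) *+ k) + msize N).-1)%N.
Proof.
move=> h; elim: k => [|k IH] /=; first by rewrite mulm0n addm0.
by rewrite mulmSr addmA; apply: step.
Qed.

Lemma foldr_step (J : 'X_{1..n}) (s : seq 'I_n) N :
  (msize (foldr (fun i N => iter (J i) (Di_comp der i) N) N s
      - 'X_[\sum_(i <- s) U_(i) *+ J i] * N)
     <= (mdeg (\sum_(i <- s) U_(i) *+ J i) + msize N).-1)%N.
Proof.
elim: s => [|i s IH] /=.
  by rewrite big_nil mpolyX0 mul1r subrr msize0.
rewrite big_cons addmC; exact: iter_step.
Qed.

Lemma DJ_approx J N :
  (msize (DJ_comp der J N - 'X_[J] * N) <= (mdeg J + msize N).-1)%N.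
Proof.
have := foldr_step J (enum 'I_n) N.
have e : (\sum_(i <- enum 'I_n) U_(i) *+ J i)%MM = J.
  by rewrite [RHS]multinomUE_id big_enum /=; apply: eq_bigl => i; rewrite inE.
by rewrite e.
Qed.

Lemma comp_approx A B :
  (msize (dcomp der A B - A * B) <= (msize (A * B)).-1)%N.
Proof.
have [->|A0] := eqVneq A 0; first by rewrite dcomp0l mul0r subrr msize0.
have [->|B0] := eqVneq B 0; first by rewrite dcomp0r mulr0 subrr msize0.
have -> : dcomp der A B - A * B =
    \sum_(m <- msupp A) A@_m *: (DJ_comp der m B - 'X_[m] * B).
  have -> : A * B = \sum_(m <- msupp A) A@_m *: ('X_[m] * B).
    by rewrite {1}[A]mpolyE mulr_suml; apply: eq_bigr => m _; rewrite scalerAl.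
  by rewrite /dcomp -sumrB; apply: eq_bigr => m _; rewrite scalerBr.
rewrite big_seq; apply: msize_sum_le => m hm.
apply: leq_trans (msizeZ_le _ _) _; apply: leq_trans (DJ_approx _ _) _.
have := msize_mdeg_lt hm.
rewrite msizeM // -!subn1; apply: ar1.
Qed.
End D.

Lemma ar2 x y : (0 < x -> 0 < y -> (x + y).-1.-1 = x.-1 + y.-1)%N.
Proof. by case: x => // x; case: y => // y; rewrite addSn addnS. Qed.

Lemma ar3 x p q : (0 < p -> 0 < q -> x <= p.-1 -> (x + q).-1 <= (p + q).-1.-1)%N.
Proof. rewrite -!subn1; lia. Qed.
Lemma ar4 x p q : (0 < p -> 0 < q -> x <= q.-1 -> (p + x).-1 <= (p + q).-1.-1)%N.
Proof. rewrite -!subn1; lia. Qed.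

Section S.
Variables (K : fieldType) (n : nat).
Implicit Types P Q X : {mpoly K[n]}.

Definition hd (d : nat) P : {mpoly K[n]} :=
  \sum_(m <- msupp P | mdeg m == d) P@_m *: 'X_[m].

Lemma SymE P : Sym P = hd (msize P).-1 P.
Proof. by []. Qed.

Lemma hd_coef d P m : (hd d P)@_m = if mdeg m == d then P@_m else 0.
Proof.
rewrite /hd (raddf_sum (mcoeff m)) big_mkcond /=.
under eq_bigr => m' _ do rewrite /= mcoeffZ mcoeffX.
have [h|h] := boolP (m \in msupp P).
  rewrite (bigD1_seq m) //= ?msupp_uniq // eqxx mulr1 big1 ?addr0.
    by case: ifP; rewrite ?mulr1.
  by move=> m' /negbTE ->; rewrite mulr0 if_same.
rewrite memN_msupp_eq0 // if_same big1_seq // => m' /andP [_ hm'].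
have -> : (m' == m) = false by apply: contraNF h => /eqP <-.
by rewrite mulr0 if_same.
Qed.

Lemma hdD d P Q : hd d (P + Q) = hd d P + hd d Q.
Proof.
apply/mpolyP => m; rewrite mcoeffD !hd_coef mcoeffD.
by case: ifP; rewrite ?addr0.
Qed.

Lemma hd_small d P : (msize P <= d)%N -> hd d P = 0.
Proof.
move=> h; apply/mpolyP => m; rewrite hd_coef mcoeff0.
case: eqP => // e; apply: msize_coef0; rewrite e //.
Qed.

Lemma hd_homog d P : P \is d.-homog -> hd d P = P.
Proof.
move=> hP; apply/mpolyP => m; rewrite hd_coef.
case: eqP => // /eqP ne; rewrite (dhomog_nemf_coeff hP) //.
Qed.

Lemma Sym_sub P : (msize (P - Sym P) <= (msize P).-1)%N.
Proof.
apply: msize_le => m h; rewrite mcoeffB SymE hd_coef.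
case: eqP => [_|ne]; first by rewrite subrr.
rewrite subr0 msize_coef0 //.
by move: h ne; case: (msize P) => [|s] /=; [|rewrite leq_eqVlt => /predU1P [->|]].
Qed.

Lemma Sym_eq0 P : (Sym P == 0) = (P == 0).
Proof.
apply/eqP/eqP => [h|->]; last by rewrite SymE hd_small // msize0.
apply/eqP; apply: contraT => P0.
have := congr1 (mcoeff (mlead P)) h; rewrite SymE hd_coef mcoeff0.
rewrite -(mlead_deg P0) /= eqxx => /eqP.
by rewrite mleadc_eq0 (negbTE P0).
Qed.

Lemma msize_Sym P : msize (Sym P) = msize P.
Proof.
apply/eqP; rewrite eqn_leq; apply/andP; split.
  apply: msize_le => m h; rewrite SymE hd_coef.
  case: eqP => // e; exact: msize_coef0.
have [->|P0] := eqVneq P 0; first by rewrite msize0.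
rewrite -(mlead_deg P0); apply: msize_mdeg_lt.
rewrite mcoeff_msupp SymE hd_coef -(mlead_deg P0) /= eqxx mleadc_eq0 //.
Qed.

Lemma Sym_homog P : Sym P \is (msize P).-1.-homog.
Proof.
apply/dhomogP => m; rewrite mcoeff_msupp SymE hd_coef.
by case: (mdeg m =P _) => [//|_]; rewrite eqxx.
Qed.

Lemma msizeMle' P Q : (msize (P * Q) <= (msize P + msize Q).-1)%N.
Proof.
have [->|P0] := eqVneq P 0; first by rewrite mul0r msize0.
have [->|Q0] := eqVneq Q 0; first by rewrite mulr0 msize0.
by rewrite msizeM.
Qed.

Lemma Sym_mul P Q : P != 0 -> Q != 0 -> Sym (P * Q) = Sym P * Sym Q.
Proof.
move=> P0 Q0.
have e : P * Q = Sym P * Sym Q + ((P - Sym P) * Q + Sym P * (Q - Sym Q)) by ring.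
rewrite SymE msizeM // {1}e hdD hd_homog; last first.
  have -> : (msize P + msize Q).-1.-1 = ((msize P).-1 + (msize Q).-1)%N.
    by rewrite ar2 // lt0n msize_poly_eq0.
  exact: dhomogM (Sym_homog P) (Sym_homog Q).
rewrite hd_small ?addr0 //.
apply: leq_trans (msizeD_le _ _) _; rewrite geq_max; apply/andP; split.
  apply: leq_trans (msizeMle' _ _) _.
  by apply: ar3 (Sym_sub P); rewrite lt0n msize_poly_eq0.
apply: leq_trans (msizeMle' _ _) _; rewrite msize_Sym.
by apply: ar4 (Sym_sub Q); rewrite lt0n msize_poly_eq0.
Qed.

Lemma ord_ltP X (t : nat) : ord_lt X t%:Z = (msize X <= t)%N.
Proof.
rewrite /ord_lt /dord; case: eqP => [->|/eqP X0]; first by rewrite msize0.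
by rewrite ltz_nat [msize X](mpolySpred _ X0).
Qed.

End S.

Lemma ar8 (g s1 s2 t l : nat) : (0 < g)%N -> (0 < s1)%N -> (0 < s2)%N -> ((g + s2).-1 <= t)%N ->
   l = (s1 + s2).-1 -> ((g.-1)%:Z < t%:Z - (l.-1%:Z - (s1.-1)%:Z)).
Proof.
move=> hg hs1 hs2; case: g hg => [//|g] _; case: s1 hs1 => [//|s1] _; case: s2 hs2 => [//|s2] _.
rewrite !addSn !addnS /= => h ->; lia.
Qed.

Lemma ar5 t M : (t < M)%N -> (t <= M.-1)%N.
Proof. by case: M. Qed.

Lemma ar6 x y : (x <= y)%N -> (x.-1 <= y.-1)%N.
Proof. by move=> h; rewrite -!subn1 leq_sub2r. Qed.

Lemma ar7 g s c : (0 < s)%N -> (0 < c)%N -> (g <= s.-1)%N -> g = (s + c).-1 -> False.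
Proof. move=> hs hc; case: s hs => [//|s] _; case: c hc => [//|c] _; rewrite addSn addnS /=; lia. Qed.

Lemma cop_unit (K : fieldType) n (S1 S2 : {mpoly K[n]}) : mcoprime S1 S2 -> S1 != 0 ->
  forall q, dv q S1 -> dv q S2 -> q \is a GRing.unit.
Proof.
move=> cop S0 q h1 h2.
have q0 : q != 0 := dv_ne0 h1 S0.
have hs := cop q h1 h2.
have : msize q == 1%N by rewrite eqn_leq hs lt0n msize_poly_eq0.
case/msize_poly1P => c c0 ->.
by apply/unitrPr; exists (c^-1)%:MP; rewrite -mpolyCM mulfV.
Qed.

Theorem mainTheorem4 (K : fieldType) (n : nat) (der : 'I_n -> K -> K)
  (Hder : commuting_derivations der)
  (L S1 S2 : {mpoly K[n]})
  (HS1 : S1 \is homog mdeg) (HS2 : S2 \is homog mdeg)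
  (Hcop : mcoprime S1 S2)
  (HsymL : Sym L = S1 * S2)
  (t : nat) (Ht : (t < (msize L).-1)%N)
  (F1 F2 F1' F2' : {mpoly K[n]})
  (HF : partial_factorization der L t S1 S2 F1 F2)
  (HF' : partial_factorization der L t S1 S2 F1' F2') :
  ord_lt (F1 - F1') (t%:Z - ((msize L).-1%:Z - (pdeg S1)%:Z)) /\
  ord_lt (F2 - F2') (t%:Z - ((msize L).-1%:Z - (pdeg S2)%:Z)).
Proof.
case: HF => h1 h2; rewrite ord_ltP => hE1.
case: HF' => h1' h2'; rewrite ord_ltP => hE2.
have L0 : L != 0 by rewrite -msize_poly_eq0; apply: contraTneq Ht => ->.
have S120 : S1 * S2 != 0 by rewrite -HsymL Sym_eq0.
have S10 : S1 != 0 by apply: contraNneq S120 => ->; rewrite mul0r.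
have S20 : S2 != 0 by apply: contraNneq S120 => ->; rewrite mulr0.
have eL : msize L = (msize S1 + msize S2).-1 by rewrite -msize_Sym HsymL msizeM.
have nz : forall F S : {mpoly K[n]}, Sym F = S -> S != 0 -> F != 0 /\ msize F = msize S.
  move=> F S hS S0; split; last by rewrite -msize_Sym hS.
  by rewrite -Sym_eq0 hS.
have [F10 eF1] := nz _ _ h1 S10.
have [F10' eF1'] := nz _ _ h1' S10.
have [F20 eF2] := nz _ _ h2 S20.
have [F20' eF2'] := nz _ _ h2' S20.
have pS1 : (0 < msize S1)%N by rewrite lt0n msize_poly_eq0.
have pS2 : (0 < msize S2)%N by rewrite lt0n msize_poly_eq0.
set G1 := F1 - F1'; set G2 := F2 - F2'.
have hG1 : (msize G1 <= (msize S1).-1)%N.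
  have -> : G1 = (F1 - Sym F1) - (F1' - Sym F1') by rewrite h1 h1' /G1; ring.
  apply: leq_trans (msizeD_le _ _) _; rewrite msizeN geq_max.
  by have := Sym_sub F1; have := Sym_sub F1'; rewrite eF1 eF1' => -> ->.
have hG2 : (msize G2 <= (msize S2).-1)%N.
  have -> : G2 = (F2 - Sym F2) - (F2' - Sym F2') by rewrite h2 h2' /G2; ring.
  apply: leq_trans (msizeD_le _ _) _; rewrite msizeN geq_max.
  by have := Sym_sub F2; have := Sym_sub F2'; rewrite eF2 eF2' => -> ->.
have hE : (msize (dcomp der F1 G2 + dcomp der G1 F2') <= t)%N.
  have -> : dcomp der F1 G2 + dcomp der G1 F2' =
      (L - dcomp der F1' F2') - (L - dcomp der F1 F2).
    by rewrite /G1 /G2 (dcompBr Hder) (dcompBl der); ring.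
  by apply: leq_trans (msizeD_le _ _) _; rewrite msizeN geq_max hE2 hE1.
set a := msize (G1 * F2'); set b := msize (F1 * G2).
have hM : (maxn a b <= t)%N.
  rewrite leqNgt; apply/negP => hM.
  have hX : (msize (F1 * G2 + G1 * F2') <= (maxn a b).-1)%N.
    have -> : F1 * G2 + G1 * F2' = (dcomp der F1 G2 + dcomp der G1 F2') -
       ((dcomp der F1 G2 - F1 * G2) + (dcomp der G1 F2' - G1 * F2')) by ring.
    apply: leq_trans (msizeD_le _ _) _; rewrite msizeN geq_max; apply/andP; split.
      by apply: leq_trans hE _; apply: ar5.
    apply: leq_trans (msizeD_le _ _) _; rewrite geq_max; apply/andP; split;
      apply: leq_trans (comp_approx Hder _ _) _; apply: ar6;
      by rewrite ?leq_maxl ?leq_maxr.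
  have := hd_small hX; rewrite hdD => hX0.
  have Mpos : (0 < maxn a b)%N by apply: leq_ltn_trans hM.
  have key1 : b = maxn a b -> hd (maxn a b).-1 (F1 * G2) = S1 * Sym G2 /\ G2 != 0.
    move=> eb; have G20 : G2 != 0.
      by apply: contraTneq Mpos => e; rewrite -eb /b e mulr0 msize0.
    by split => //; rewrite -eb /b -SymE Sym_mul // h1.
  have key2 : a = maxn a b -> hd (maxn a b).-1 (G1 * F2') = Sym G1 * S2 /\ G1 != 0.
    move=> ea; have G10 : G1 != 0.
      by apply: contraTneq Mpos => e; rewrite -ea /a e mul0r msize0.
    by split => //; rewrite -ea /a -SymE Sym_mul // h2'.
  have key1' : (b < maxn a b)%N -> hd (maxn a b).-1 (F1 * G2) = 0.
    by move=> lt; apply: hd_small; apply: ar5.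
  have key2' : (a < maxn a b)%N -> hd (maxn a b).-1 (G1 * F2') = 0.
    by move=> lt; apply: hd_small; apply: ar5.
  case: (ltngtP a b) => hab.
  - have em : maxn a b = b by apply/maxn_idPr/ltnW.
    have [k1 G20] := key1 (esym em).
    move: hX0; rewrite k1 key2' ?em // addr0 => /eqP; rewrite mulf_eq0 (negbTE S10) /=.
    by rewrite Sym_eq0 (negbTE G20).
  - have em : maxn a b = a by apply/maxn_idPl/ltnW.
    have [k2 G10] := key2 (esym em).
    move: hX0; rewrite k2 key1' ?em // add0r => /eqP; rewrite mulf_eq0 (negbTE S20) orbF.
    by rewrite Sym_eq0 (negbTE G10).
  - have em : maxn a b = a by rewrite hab maxnn.
    have eb : b = maxn a b by rewrite em hab.
    have [k1 G20] := key1 eb.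
    have [k2 G10] := key2 (esym em).
    move: hX0; rewrite k1 k2 => /eqP; rewrite addr_eq0 -mulNr => /eqP e.
    have [c ec] := mpoly_euclid S10 (cop_unit Hcop S10) e.
    have c0 : c != 0.
      apply: contraNneq G10 => c0; rewrite -Sym_eq0 -oppr_eq0 ec c0 mulr0 //.
    have := congr1 (fun p : {mpoly K[n]} => msize p) ec.
    rewrite /= msizeN msize_Sym msizeM // => e2.
    by apply: (ar7 pS1 _ hG1 e2); rewrite lt0n msize_poly_eq0.
have ha : (a <= t)%N by apply: leq_trans hM; rewrite leq_maxl.
have hb : (b <= t)%N by apply: leq_trans hM; rewrite leq_maxr.
split.
  have [->|G10] := eqVneq G1 0; first by rewrite /ord_lt /dord eqxx.
  rewrite /ord_lt /dord (negbTE G10) /pdeg.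
  apply: (ar8 (s2 := msize S2)) => //; first by rewrite lt0n msize_poly_eq0.
  by move: ha; rewrite /a msizeM // eF2'.
have [->|G20] := eqVneq G2 0; first by rewrite /ord_lt /dord eqxx.
rewrite /ord_lt /dord (negbTE G20) /pdeg.
apply: (ar8 (s2 := msize S1)) => //; first by rewrite lt0n msize_poly_eq0.
  by move: hb; rewrite /b msizeM // eF1 addnC.
by rewrite eL addnC.
Qed.
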